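(* Let $\Phi_1,\dots,\Phi_N:\mathcal L(\mathbb C^d)\to\mathcal L(\mathbb C^d)$ be quantum channels and $\mathbf e^{(1)},\dots,\mathbf e^{(N)}$ orthonormal bases of $\mathbb C^d$ such that for all $i\ne j$ in $[N]$, $\langle G_{\Phi_i,\mathbf e^{(i)}}-\omega,\ G_{\Phi_j,\mathbf e^{(j)}}-\omega\rangle=0$ (Hilbert–Schmidt inner product). Then $$\min\Big\{\operatorname{Tr}H:\ H \text{ Hermitian},\ H\ge G_{\Phi_i,\mathbf e^{(i)}}\ \forall i\in[N]\Big\}=1-N+\sum_{i=1}^N\operatorname{Tr}G_{\Phi_i,\mathbf e^{(i)}}.$$
   Context: For $X=\sum_{i,j}X_{ij}|i\rangle\langle j|$, $|X\rangle:=\sum_{i,j}X_{ij}|i\rangle\otimes|j\rangle$. For a channel $\Phi$ with Hilbert–Schmidt adjoint $\Phi^*$ and an orthonormal basis $\mathbf e=(e_i)$, $G_{\Phi,\mathbf e}:=\sum_{i=1}^d |\Phi^*(|e_i\rangle\langle e_i|)\rangle\langle\Phi^*(|e_i\rangle\langle e_i|)|/\operatorname{Tr}\Phi^*(|e_i\rangle\langle e_i|)$ (terms with zero denominator omitted). $\omega:=\frac1d\sum_{i,j=1}^d|ii\rangle\langle jj|$ is the maximally entangled state. *)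

(* Defs.v *)
(* Complex numbers are modelled as R[i] (complex R) for an
   arbitrary real closed field R; taking R to be the reals gives C. *)
From HB Require Import structures.
From mathcomp Require Import all_boot all_order all_algebra.
From mathcomp Require Import complex mxtens.
Set Implicit Arguments.
Unset Strict Implicit.
Unset Printing Implicit Defensive.
Import Order.TTheory GRing.Theory Num.Theory Num.Def.
Local Open Scope ring_scope.

Section QDefs.
Variable R : rcfType.
Local Notation C := (R[i]).

Definition hadj m n (A : 'M[C]_(m, n)) : 'M[C]_(n, m) := map_mx conjC A^T.

Definition is_hermitian n (H : 'M[C]_n) : Prop := hadj H = H.

Definition psd n (A : 'M[C]_n) : Prop :=
  forall v : 'cV[C]_n, 0 <= (hadj v *m A *m v) 0 0.

Definition loewner_ge n (A B : 'M[C]_n) : Prop := psd (A - B).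

Definition hs_inner m (A B : 'M[C]_m) : C := \tr (hadj A *m B).

Variable d : nat.

Definition choi (Phi : 'M[C]_d -> 'M[C]_d) : 'M[C]_(d * d) :=
  \sum_(i < d) \sum_(j < d) (delta_mx i j *t Phi (delta_mx i j)).

Definition quantum_channel (Phi : 'M[C]_d -> 'M[C]_d) : Prop :=
  [/\ (forall (a : C) (X Y : 'M[C]_d), Phi (a *: X + Y) = a *: Phi X + Phi Y),
      psd (choi Phi)
    & forall X : 'M[C]_d, \tr (Phi X) = \tr X].

(* Hilbert-Schmidt adjoint: the linear map Phi^* with
   <Phi^*(A), B> = <A, Phi(B)>; entrywise (Phi^* A)_{kl} = <Phi(E_kl), A>. *)
Definition hs_adjoint (Phi : 'M[C]_d -> 'M[C]_d) (A : 'M[C]_d) : 'M[C]_d :=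
  \matrix_(k, l) hs_inner (Phi (delta_mx k l)) A.

Definition orthonormal_basis (e : 'I_d -> 'cV[C]_d) : Prop :=
  forall i j, (hadj (e i) *m e j) 0 0 = (i == j)%:R.

Definition ketb (i : 'I_d) : 'cV[C]_d := delta_mx i 0.

Definition vket (X : 'M[C]_d) : 'cV[C]_(d * d) :=
  \sum_(i < d) \sum_(j < d) X i j *: (ketb i *t ketb j).

Definition vproj (X : 'M[C]_d) : 'M[C]_(d * d) := vket X *m hadj (vket X).

Definition Gmat (Phi : 'M[C]_d -> 'M[C]_d) (e : 'I_d -> 'cV[C]_d)
  : 'M[C]_(d * d) :=
  \sum_(i < d | \tr (hs_adjoint Phi (e i *m hadj (e i))) != 0)
     (\tr (hs_adjoint Phi (e i *m hadj (e i))))^-1 *: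
       vproj (hs_adjoint Phi (e i *m hadj (e i))).

Definition omega : 'M[C]_(d * d) :=
  (d%:R)^-1 *: \sum_(i < d) \sum_(j < d)
     ((ketb i *t ketb i) *m hadj (ketb j *t ketb j)).

End QDefs.

(* Main.v *)
Require Import Defs.
From HB Require Import structures.
From mathcomp Require Import all_boot all_order all_algebra.
From mathcomp Require Import complex mxtens spectral sesquilinear mxred.
From mathcomp Require Import ring.
Set Implicit Arguments.
Unset Strict Implicit.
Unset Printing Implicit Defensive.
Import Order.TTheory GRing.Theory Num.Theory Num.Def.
Local Open Scope ring_scope.
Section S1.
Variable R : rcfType.
Local Notation C := (R[i]).

Lemma hadj_mul m n p (A : 'M[C]_(m,n)) (B : 'M[C]_(n,p)) :
  hadj (A *m B) = hadj B *m hadj A.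
Proof. by rewrite /hadj trmx_mul map_mxM. Qed.

Lemma hadjK m n (A : 'M[C]_(m,n)) : hadj (hadj A) = A.
Proof. by apply/matrixP => i j; rewrite !mxE conjCK. Qed.

Lemma hadjD m n (A B : 'M[C]_(m,n)) : hadj (A + B) = hadj A + hadj B.
Proof. by apply/matrixP => i j; rewrite !mxE rmorphD. Qed.

Lemma hadjN m n (A : 'M[C]_(m,n)) : hadj (- A) = - hadj A.
Proof. by apply/matrixP => i j; rewrite !mxE rmorphN. Qed.

Lemma hadjB m n (A B : 'M[C]_(m,n)) : hadj (A - B) = hadj A - hadj B.
Proof. by rewrite hadjD hadjN. Qed.

Lemma hadj0 m n : hadj (0 : 'M[C]_(m,n)) = 0.
Proof. by apply/matrixP => i j; rewrite !mxE rmorph0. Qed.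

Lemma hadjZ m n (a : C) (A : 'M[C]_(m,n)) : hadj (a *: A) = a^* *: hadj A.
Proof. by apply/matrixP => i j; rewrite !mxE rmorphM. Qed.

Lemma hadj_sum m n (I : finType) (P : pred I) (F : I -> 'M[C]_(m,n)) :
  hadj (\sum_(i | P i) F i) = \sum_(i | P i) hadj (F i).
Proof. exact: (big_morph _ (@hadjD m n) (@hadj0 m n)). Qed.

Lemma hadj_delta m n (i : 'I_m) (j : 'I_n) :
  hadj (delta_mx i j : 'M[C]_(m,n)) = delta_mx j i.
Proof.
apply/matrixP => a b; rewrite !mxE rmorph_nat.
by rewrite andbC.
Qed.

Lemma hadjE m n (A : 'M[C]_(m,n)) i j : hadj A i j = (A j i)^*.
Proof. by rewrite /hadj !mxE. Qed.

Definition qf n (A : 'M[C]_n) (u v : 'cV[C]_n) := (hadj u *m A *m v) 0 0.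

Lemma qf_lin2 n (A : 'M[C]_n) (a c : C) (u v : 'cV[C]_n) :
  qf A (a *: u + c *: v) (a *: u + c *: v) =
  a^* * a * qf A u u + a^* * c * qf A u v + c^* * a * qf A v u
  + c^* * c * qf A v v.
Proof.
have qfDl x y z : qf A (x + y) z = qf A x z + qf A y z.
  by rewrite /qf hadjD !mulmxDl mxE.
have qfDr x y z : qf A x (y + z) = qf A x y + qf A x z.
  by rewrite /qf mulmxDr mxE.
have qfZl (s : C) x y : qf A (s *: x) y = s^* * qf A x y.
  by rewrite /qf hadjZ -!scalemxAl mxE.
have qfZr (s : C) x y : qf A x (s *: y) = s * qf A x y.
  by rewrite /qf -!scalemxAr mxE.
rewrite !qfDl !qfDr !qfZl !qfZr.
ring.
Qed.

Lemma qf_delta n (A : 'M[C]_n) k l :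
  qf A (delta_mx k 0) (delta_mx l 0) = A k l.
Proof. by rewrite /qf hadj_delta -rowE -colE !mxE. Qed.

Lemma ge0_conj (x : C) : 0 <= x -> x^* = x.
Proof. by move=> h; apply: conj_Creal; apply: ger0_real. Qed.

Lemma psd_herm n (A : 'M[C]_n) : psd A -> hadj A = A.
Proof.
move=> hA; apply/matrixP => l k; rewrite !mxE.
have h0 j : (A j j)^* = A j j.
  by apply: ge0_conj; rewrite -qf_delta; apply: hA.
have h1 (c : C) : (A k k + c * A k l + c^* * A l k + c^* * c * A l l)^*
   = A k k + c * A k l + c^* * A l k + c^* * c * A l l.
  apply: ge0_conj.
  have := hA (1 *: delta_mx k 0 + c *: delta_mx l 0).
  by rewrite -/(qf _ _ _) qf_lin2 !qf_delta rmorph1 !mul1r !mulr1.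
have e1 := h1 1; have e2 := h1 'i.
rewrite !rmorphD !rmorphM /= ?rmorph1 ?conjCi !h0 in e1 e2.
set x := A k l in e1 e2 *; set y := A l k in e1 e2 *.
have hi : 1 + 'i * 'i = 0 :> C by rewrite -expr2 sqrCi addrN.
have E1 : x^* + y^* = x + y.
  apply: (addrI (A k k)); apply: (addIr (A l l)); rewrite !addrA.
  by move: e1; rewrite !mul1r.
have E2 : - ('i * x^*) + 'i * y^* = 'i * x - 'i * y.
  apply: (addrI (A k k)); apply: (addIr (- ('i * 'i * A l l))); rewrite !addrA.
  by move: e2; rewrite ?mulNr ?mulrN ?mulNr !rmorphN /= conjCi opprK.
apply: (@pmulrnI C 2%N erefl).
have F1 (a b : C) : a *+ 2 = (a + b) + 'i * (- ('i * a) + 'i * b)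
   + (1 + 'i * 'i) * (a - b) by ring.
have F2 (a b : C) : b *+ 2 = (a + b) + 'i * ('i * a - 'i * b)
   + (1 + 'i * 'i) * (b - a) by ring.
by rewrite (F1 _ y^*) E1 E2 hi !mul0r addr0 (F2 x) hi mul0r addr0.
Qed.
End S1.
Section S2.
Variable R : rcfType.
Local Notation C := (R[i]).

Lemma mx11_mul m (X : 'M[C]_(1, m)) (Y : 'M[C]_(m, 1)) :
  (X *m Y) 0 0 = \sum_(k < m) X 0 k * Y k 0.
Proof. by rewrite mxE. Qed.

Lemma norm2_ge0 m (y : 'cV[C]_m) : 0 <= (hadj y *m y) 0 0.
Proof.
rewrite mxE; apply: sumr_ge0 => k _; rewrite !mxE mulrC; exact: mul_conjC_ge0.
Qed.

Lemma norm2_eq0 m (y : 'cV[C]_m) : (hadj y *m y) 0 0 = 0 -> y = 0.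
Proof.
have hge : forall k : 'I_m, true -> 0 <= hadj y 0 k * y k 0.
  by move=> k _; rewrite !mxE mulrC; exact: mul_conjC_ge0.
rewrite mxE => /psumr_eq0P h; apply/matrixP => k j; rewrite ord1 mxE.
have := h hge k isT; rewrite !mxE mulrC => /eqP; rewrite mul_conjC_eq0 => /eqP-> //.
Qed.

Lemma psd_ker n (A : 'M[C]_n) (v : 'cV[C]_n) :
  psd A -> qf A v v = 0 -> A *m v = 0.
Proof.
move=> hA hv; have hh := psd_herm hA.
set y := A *m v.
set nn := (hadj y *m y) 0 0.
set b := qf A y y.
have nn0 : 0 <= nn by apply: norm2_ge0.
have b0 : 0 <= b by apply: hA.
have e1 : qf A v y = nn by rewrite /qf /nn /y hadj_mul hh mulmxA.
have e2 : qf A y v = nn by rewrite /qf /nn /y mulmxA.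
have := hA ((b + 1) *: v + (- nn) *: y).
rewrite -/(qf _ _ _) qf_lin2 e1 e2 hv -/b.
rewrite !rmorphD /= rmorphN /= rmorph1 ge0_conj // ge0_conj //.
have -> : (b + 1) * (b + 1) * 0 + (b + 1) * - nn * nn + - nn * (b + 1) * nn +
   - nn * - nn * b = - (nn * nn * (b + 2)) by ring.
rewrite oppr_ge0 => h.
have h2 : nn * nn * (b + 2) = 0.
  apply/eqP; rewrite eq_le h /=; apply: mulr_ge0; first exact: mulr_ge0.
  by apply: addr_ge0.
have hb : b + 2 != 0.
  by rewrite gt_eqF // ltr_wpDl.
apply: norm2_eq0; apply/eqP; move: h2 => /eqP.
by rewrite !mulf_eq0 (negbTE hb) orbF orbb.
Qed.

Lemma psd0 n : psd (0 : 'M[C]_n).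
Proof. by move=> v; rewrite mulmx0 mul0mx mxE. Qed.

Lemma psdD n (A B : 'M[C]_n) : psd A -> psd B -> psd (A + B).
Proof.
move=> hA hB v; rewrite mulmxDr mulmxDl mxE; apply: addr_ge0; [exact: hA|exact: hB].
Qed.

Lemma psd_sum n (I : finType) (P : pred I) (F : I -> 'M[C]_n) :
  (forall i, P i -> psd (F i)) -> psd (\sum_(i | P i) F i).
Proof.
by move=> h; apply: (big_ind (@psd _ n)); [exact: psd0|exact: psdD|].
Qed.

Lemma psd_rank1 n (t : C) (y : 'cV[C]_n) : 0 <= t -> psd (t *: (y *m hadj y)).
Proof.
move=> t0 v; rewrite -scalemxAr -scalemxAl mxE; apply: mulr_ge0 => //.
rewrite !mulmxA -(mulmxA (hadj v *m y)) mx11_mul big_ord1.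
have -> : (hadj v *m y) 0 0 = ((hadj y *m v) 0 0)^*.
  by rewrite -[in LHS](hadjK y) -hadj_mul hadjE.
by rewrite mulrC; exact: mul_conjC_ge0.
Qed.
End S2.
Section S3.
Variable R : rcfType.
Local Notation C := (R[i]).

Lemma psd_tr_ge0 n (A : 'M[C]_n) : psd A -> 0 <= \tr A.
Proof.
move=> hA; apply: sumr_ge0 => k _; rewrite -qf_delta; exact: hA.
Qed.

Lemma psd_tr0 n (A : 'M[C]_n) : psd A -> \tr A = 0 -> A = 0.
Proof.
move=> hA /psumr_eq0P h.
have hk : forall k : 'I_n, A *m (delta_mx k 0 : 'cV[C]_n) = 0.
  move=> k; apply: (psd_ker hA); rewrite qf_delta; apply: h => //.
  by move=> i _; rewrite -qf_delta; exact: hA.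
apply/matrixP => i j.
have /matrixP/(_ i 0) := hk j.
by rewrite -colE !mxE.
Qed.

Lemma tr_delta n (k l : 'I_n) : \tr (delta_mx k l : 'M[C]_n) = (k == l)%:R.
Proof.
rewrite /mxtrace (bigD1 k) //= big1 ?addr0; first by rewrite mxE eqxx.
by move=> i /negbTE ik; rewrite mxE ik.
Qed.

Lemma tr_hadj n (A : 'M[C]_n) : \tr (hadj A) = (\tr A)^*.
Proof.
rewrite /mxtrace rmorph_sum; apply: eq_bigr => i _; exact: hadjE.
Qed.

Lemma tr_sum n (I : finType) (P : pred I) (F : I -> 'M[C]_n) :
  \tr (\sum_(i | P i) F i) = \sum_(i | P i) \tr (F i).
Proof.
rewrite /mxtrace; under eq_bigr do rewrite summxE.
by rewrite exchange_big.
Qed.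

Lemma tens11 (X Y : 'M[C]_1) : (X *t Y) 0 0 = X 0 0 * Y 0 0.
Proof.
rewrite mxE.
by rewrite !(ord1 (mxtens_unindex _).1) !(ord1 (mxtens_unindex _).2).
Qed.

Lemma hadj_tens m n p q (A : 'M[C]_(m,n)) (B : 'M[C]_(p,q)) :
  hadj (A *t B) = hadj A *t hadj B.
Proof. by rewrite /hadj trmx_tens map_mxT. Qed.

Lemma qf_expand n (A : 'M[C]_n) (v : 'cV[C]_n) :
  qf A v v = \sum_k \sum_l (v k 0)^* * A k l * v l 0.
Proof.
rewrite /qf mxE exchange_big; apply: eq_bigr => l _.
rewrite mxE mulr_suml; apply: eq_bigr => k _; by rewrite hadjE.
Qed.

Lemma qf_tens n (A B : 'M[C]_n) (a b : 'cV[C]_n) :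
  qf (A *t B) (a *t b) (a *t b) = qf A a a * qf B b b.
Proof.
have E : (hadj (a *t b) *m (A *t B) *m (a *t b) : 'M_(1*1, 1*1))
   = ((hadj a *m A *m a) *t (hadj b *m B *m b)).
  by rewrite hadj_tens !tensmx_mul.
rewrite /qf -tens11.
exact (f_equal (fun M : 'M[C]_(1*1,1*1) => M 0 0) E).
Qed.

Lemma qf_deltamx n (k l : 'I_n) (u : 'cV[C]_n) :
  qf (delta_mx k l) u u = (u k 0)^* * u l 0.
Proof.
rewrite /qf -(mul_delta_mx (0 : 'I_1)) mulmxA -colE -mulmxA -rowE mx11_mul big_ord1.
by rewrite !mxE.
Qed.

Lemma hs_inner_proj n (M : 'M[C]_n) (f : 'cV[C]_n) :
  hs_inner M (f *m hadj f) = (qf M f f)^*.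
Proof.
rewrite /hs_inner mulmxA mxtrace_mulC mulmxA trace_mx11 /qf.
by rewrite -hadjE !hadj_mul hadjK mulmxA.
Qed.

Variable d : nat.

Lemma onb_complete (e : 'I_d -> 'cV[C]_d) : orthonormal_basis e ->
  \sum_i e i *m hadj (e i) = 1%:M.
Proof.
move=> he.
pose U : 'M[C]_d := \matrix_(p, i) e i p 0.
have h1 : hadj U *m U = 1%:M.
  apply/matrixP => i j; rewrite [RHS]mxE -he !mxE; apply: eq_bigr => p _.
  by rewrite !mxE.
have h2 := mulmx1C h1.
apply/matrixP => p q; rewrite -h2 summxE !mxE; apply: eq_bigr => i _.
by rewrite !mxE big_ord1 !mxE.
Qed.

Lemma hs_adjoint_psd (Phi : 'M[C]_d -> 'M[C]_d) (f : 'cV[C]_d) :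
  quantum_channel Phi -> psd (hs_adjoint Phi (f *m hadj f)).
Proof.
case=> _ hJ _ v.
pose a : 'cV[C]_d := map_mx conjC v.
have := hJ (a *t f).
rewrite -/(qf _ _ _) -conjC_ge0.
suff -> : qf (choi Phi) (a *t f) (a *t f) =
          (qf (hs_adjoint Phi (f *m hadj f)) v v)^* by rewrite conjCK.
rewrite [in RHS]qf_expand rmorph_sum /qf /choi mulmx_sumr mulmx_suml summxE.
apply: eq_bigr => k _; rewrite mulmx_sumr mulmx_suml summxE rmorph_sum.
apply: eq_bigr => l _.
rewrite -/(qf _ _ _) qf_tens qf_deltamx /hs_adjoint mxE hs_inner_proj.
rewrite !mxE !rmorphM /= !conjCK; ring.
Qed.

End S3.
Section S4.
Variable R : rcfType.
Local Notation C := (R[i]).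
Variable d : nat.

Lemma ketbE (a i : 'I_d) (x : 'I_1) : ketb R a i x = (i == a)%:R.
Proof. by rewrite /ketb mxE (ord1 x) eqxx andbT. Qed.

Lemma sum_delta (F : 'I_d -> C) i : \sum_a F a * (i == a)%:R = F i.
Proof.
rewrite (bigD1 i) //= eqxx mulr1 big1 ?addr0 // => a /negbTE.
by rewrite eq_sym => ->; rewrite mulr0.
Qed.

Lemma vketE (X : 'M[C]_d) i j : vket X (mxtens_index (i, j)) 0 = X i j.
Proof.
rewrite /vket summxE.
under eq_bigr => a _ do rewrite summxE.
have h1 : forall x : 'I_1, (x == 0) = true by move=> x; rewrite (ord1 x).
under eq_bigr => a _ do under eq_bigr => b _ do
  rewrite !mxE mxtens_indexK /= !h1 !andbT mulrA mulrAC.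
under eq_bigr => a _ do rewrite -mulr_suml.
by rewrite sum_delta sum_delta.
Qed.

Lemma vket_sum (I : finType) (P : pred I) (F : I -> 'M[C]_d) :
  vket (\sum_(i | P i) F i) = \sum_(i | P i) vket (F i).
Proof.
apply/matrixP => p q; rewrite (ord1 q); case: (mxtens_indexP p) => i j.
rewrite vketE !summxE; apply: eq_bigr => k _; by rewrite vketE.
Qed.

Lemma vket0 : vket (0 : 'M[C]_d) = 0.
Proof.
apply/matrixP => p q; rewrite (ord1 q); case: (mxtens_indexP p) => i j.
by rewrite vketE !mxE.
Qed.

Definition wv : 'cV[C]_(d * d) := vket 1%:M.

Lemma vket1 : wv = \sum_i (ketb R i *t ketb R i).
Proof.
rewrite /wv /vket; apply: eq_bigr => i _.
rewrite (bigD1 i) //= big1 ?addr0; first by rewrite mxE eqxx scale1r.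
by move=> j /negbTE ij; rewrite mxE eq_sym ij scale0r.
Qed.

Lemma omegaE : omega R d = (d%:R)^-1 *: (wv *m hadj wv).
Proof.
rewrite /omega vket1 hadj_sum mulmx_suml; congr (_ *: _).
by apply: eq_bigr => i _; rewrite mulmx_sumr.
Qed.

Lemma sum_tens (F : 'I_(d * d) -> C) :
  \sum_p F p = \sum_i \sum_j F (mxtens_index (i, j)).
Proof.
rewrite pair_bigA /= (reindex (@mxtens_index d d)) /=.
  by apply: eq_bigr; case.
by exists (@mxtens_unindex d d) => x _; [exact: mxtens_indexK | exact: mxtens_unindexK].
Qed.

Lemma norm_wv : (hadj wv *m wv) 0 0 = d%:R.
Proof.
rewrite mx11_mul sum_tens.
transitivity (\sum_(i < d) (1 : C)); last by rewrite sumr_const card_ord.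
apply: eq_bigr => i _; rewrite (bigD1 i) //= big1 ?addr0.
  by rewrite hadjE /wv vketE mxE eqxx rmorph1 mulr1.
by move=> j /negbTE ij; rewrite /wv hadjE vketE mxE eq_sym ij rmorph0 mul0r.
Qed.

Lemma conj_invd : ((d%:R : C)^-1)^* = (d%:R)^-1.
Proof. by apply: ge0_conj; rewrite invr_ge0 ler0n. Qed.

Lemma herm_omega : hadj (omega R d) = omega R d.
Proof. by rewrite omegaE hadjZ hadj_mul hadjK conj_invd. Qed.

Lemma tr_omega : (0 < d)%N -> \tr (omega R d) = 1.
Proof.
move=> d0; rewrite omegaE mxtraceZ mxtrace_mulC trace_mx11 norm_wv mulVf //.
by rewrite pnatr_eq0 -lt0n.
Qed.
End S4.
Section S5.
Variable R : rcfType.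
Local Notation C := (R[i]).
Variable d : nat.
Variable Phi : 'M[C]_d -> 'M[C]_d.
Variable e : 'I_d -> 'cV[C]_d.
Hypothesis hPhi : quantum_channel Phi.
Hypothesis he : orthonormal_basis e.

Let Xm i := hs_adjoint Phi (e i *m hadj (e i)).
Let tX i := \tr (Xm i).

Lemma Xsum : \sum_i Xm i = 1%:M.
Proof.
apply/matrixP => k l; rewrite summxE /Xm /hs_adjoint.
under eq_bigr do rewrite mxE.
rewrite /hs_inner -tr_sum -mulmx_sumr onb_complete // mulmx1 tr_hadj.
case: hPhi => _ _ ->; rewrite tr_delta mxE rmorph_nat.
by [].
Qed.

Lemma Xpsd i : psd (Xm i).
Proof. exact: hs_adjoint_psd. Qed.

Lemma tX_ge0 i : 0 <= tX i.
Proof. exact: psd_tr_ge0 (Xpsd i). Qed.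

Lemma tX_conj i : (tX i)^* = tX i.
Proof. exact: ge0_conj (tX_ge0 i). Qed.

Lemma tX0 i : tX i = 0 -> Xm i = 0.
Proof. exact: psd_tr0 (Xpsd i). Qed.

Lemma sum_tX : \sum_(i | tX i != 0) tX i = d%:R.
Proof.
rewrite big_mkcond /=.
transitivity (\sum_i tX i).
  by apply: eq_bigr => i _; case: eqP => // ->.
by rewrite /tX -tr_sum Xsum mxtrace1.
Qed.

Lemma sum_vX : \sum_(i | tX i != 0) vket (Xm i) = wv R d.
Proof.
rewrite big_mkcond /=.
transitivity (\sum_i vket (Xm i)).
  by apply: eq_bigr => i _; case: eqP => // /tX0 ->; rewrite vket0.
by rewrite -vket_sum Xsum.
Qed.

Lemma Gdecomp : (0 < d)%N ->
  Gmat Phi e - omega R d =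
  \sum_(i | tX i != 0) tX i *: (((tX i)^-1 *: vket (Xm i) - (d%:R)^-1 *: wv R d)
      *m hadj ((tX i)^-1 *: vket (Xm i) - (d%:R)^-1 *: wv R d)).
Proof.
move=> d0.
set c : C := (d%:R)^-1.
set w := wv R d.
have cd : c * d%:R = 1 by rewrite mulVf // pnatr_eq0 -lt0n.
have cc : c^* = c by apply: conj_invd.
have term : forall i, tX i != 0 ->
  tX i *: (((tX i)^-1 *: vket (Xm i) - c *: w) *m hadj ((tX i)^-1 *: vket (Xm i) - c *: w))
  = (tX i)^-1 *: vproj (Xm i) - c *: (vket (Xm i) *m hadj w)
    - c *: (w *m hadj (vket (Xm i))) + (c * c * tX i) *: (w *m hadj w).
  move=> i ti.
  rewrite hadjB !hadjZ cc fmorphV /= tX_conj /vproj.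
  apply/matrixP => p q; rewrite !(mxE, big_ord1).
  by field.
rewrite (eq_bigr _ term).
rewrite !big_split /= !sumrN.
rewrite -!scaler_sumr -mulmx_suml -mulmx_sumr -hadj_sum sum_vX.
rewrite -scaler_suml -mulr_sumr sum_tX.
have -> : c * c * d%:R = c by rewrite -mulrA cd mulr1.
rewrite omegaE -/c -/w subrK.
reflexivity.
Qed.

Lemma D_psd : (0 < d)%N -> psd (Gmat Phi e - omega R d).
Proof.
move=> d0; rewrite Gdecomp //; apply: psd_sum => i _.
exact: psd_rank1 (tX_ge0 i).
Qed.
End S5.
Section S6.
Variable R : rcfType.
Local Notation C := (R[i]).

Lemma qf_row m n (X : 'M[C]_(m,n)) (M : 'M[C]_n) j :
  (X *m M *m hadj X) j j = qf M (hadj (row j X)) (hadj (row j X)).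
Proof.
by rewrite -[LHS]qf_delta /qf rowE !hadj_mul !hadjK !hadj_delta !mulmxA.
Qed.

Lemma herm_hermsym n (B : 'M[C]_n) : hadj B = B -> B \is hermsymmx.
Proof.
move=> hB; apply/is_hermitianmxP; rewrite expr0 scale1r.
by rewrite -[X in X = _]hB.
Qed.

Lemma unitary_l n (P : 'M[C]_n) : P \is unitarymx -> hadj P *m P = 1%:M.
Proof. by move=> /unitarymxP h; apply: mulmx1C; exact: h. Qed.

Lemma unitary_r n (P : 'M[C]_n) : P \is unitarymx -> P *m hadj P = 1%:M.
Proof. by move=> /unitarymxP h; exact: h. Qed.

Lemma tr_conj n (P M : 'M[C]_n) : P \is unitarymx ->
  \tr (P *m M *m hadj P) = \tr M.
Proof.
by move=> hP; rewrite mxtrace_mulC mulmxA unitary_l // mul1mx.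
Qed.

Lemma DD0 n (A B : 'M[C]_n) : psd A -> psd B -> \tr (A *m B) = 0 ->
  A *m B = 0.
Proof.
move=> hA hB htr.
have hBh := psd_herm hB.
have /orthomx_spectralP EB := hermitian_normalmx (herm_hermsym hBh).
set P := spectralmx B in EB; set s := spectral_diag B in EB.
have Pu : P \is unitarymx by apply: spectral_unitarymx.
rewrite invmx_unitary // in EB.
set Q : 'M[C]_n := hadj P.
have EB' : B = Q *m diag_mx s *m P by [].
have Es : forall j, s 0 j = (P *m B *m Q) j j.
  move=> j; rewrite EB' !mulmxA unitary_r // mul1mx -mulmxA unitary_r //.
  by rewrite mulmx1 mxE eqxx mulr1n.
have hterm : forall j, 0 <= (P *m A *m Q) j j * s 0 j.
  move=> j; rewrite Es !qf_row; apply: mulr_ge0; [exact: hA | exact: hB].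
have Etr : \tr (A *m B) = \sum_j (P *m A *m Q) j j * s 0 j.
  rewrite EB' !mulmxA mxtrace_mulC !mulmxA mul_mx_diag /mxtrace.
  by apply: eq_bigr => j _; rewrite mxE.
move: htr; rewrite Etr => /psumr_eq0P h0.
have h1 : forall j, (P *m A *m Q) j j * s 0 j = 0 by move=> j; apply: h0.
rewrite EB' !mulmxA; apply/matrixP => i j.
suff -> : A *m Q *m diag_mx s = 0 by rewrite mul0mx.
apply/matrixP => a b; rewrite mul_mx_diag [LHS]mxE [RHS]mxE.
have /eqP := h1 b; rewrite mulf_eq0 => /orP [hab|/eqP->]; last by rewrite mulr0.
have := psd_ker hA (v := hadj (row b P)).
rewrite -qf_row (eqP hab) => /(_ erefl) hk.
have hq : (A *m Q) a b = 0.
  transitivity ((A *m hadj (row b P)) a 0); last by rewrite hk mxE.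
  by rewrite !mxE; apply: eq_bigr => k _; rewrite !mxE.
by rewrite hq mul0r.
Qed.
End S6.
Section S7.
Variable R : rcfType.
Local Notation C := (R[i]).

Lemma lower_bound n N (Om H : 'M[C]_n) (D : 'I_N -> 'M[C]_n) :
  (0 < N)%N -> (forall k, psd (D k)) -> (forall k l, k != l -> D k *m D l = 0) ->
  (forall k, psd (H - (Om + D k))) ->
  \tr Om + \sum_k \tr (D k) <= \tr H.
Proof.
move=> N0 hD hDD hH.
have hDh k := psd_herm (hD k).
pose As := [seq D k | k <- enum 'I_N].
have hcomm : {in As &, forall A B, comm_mx A B}.
  move=> A B /mapP [k _ ->] /mapP [l _ ->].
  rewrite /comm_mx; case: (eqVneq k l) => [-> //| kl].
  by rewrite hDD // hDD // eq_sym.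
have [P Pu hall] := cotrigonalization hcomm.
pose B k := P *m D k *m hadj P.
have Btrig k : is_trig_mx (B k).
  have := allP hall (D k) (map_f _ (mem_enum _ k)).
  by rewrite /= /similar_to conjymx.
have Bh k : hadj (B k) = B k by rewrite /B !hadj_mul hadjK hDh mulmxA.
have Bdiag k i j : i != j -> B k i j = 0.
  move=> ij; case: (ltngtP i j) => [lt|gt|eq].
  - by have /is_trig_mxP := Btrig k; apply.
  - rewrite -Bh hadjE; have /is_trig_mxP -> := Btrig k => //.
    by rewrite rmorph0.
  - by rewrite (ord_inj eq) eqxx in ij.
have BB k l j : k != l -> B k j j * B l j j = 0.
  move=> kl.
  have : (B k *m B l) j j = 0.
    rewrite /B !mulmxA -(mulmxA _ (hadj P)) unitary_l // mulmx1.
    by rewrite -(mulmxA P (D k)) hDD // mulmx0 mul0mx mxE.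
  move=> h; rewrite -h [RHS]mxE (bigD1 j) //= big1 ?addr0 // => m mj.
  by rewrite Bdiag ?mul0r // eq_sym.
have trB k : \tr (B k) = \tr (D k) by apply: tr_conj.
have E : forall (X Y Z : 'M[C]_n) j, (X - (Y + Z)) j j = X j j - (Y j j + Z j j).
  by move=> X Y Z j; rewrite !mxE.
have key j : (P *m Om *m hadj P) j j + \sum_k B k j j <= (P *m H *m hadj P) j j.
  have hle k : (P *m Om *m hadj P) j j + B k j j <= (P *m H *m hadj P) j j.
    rewrite -subr_ge0.
    have := hH k (hadj (row j P)); rewrite -/(qf _ _ _) -qf_row.
    by rewrite mulmxBr mulmxDr mulmxBl mulmxDl E.
  case: (pickP (fun k => B k j j != 0)) => [k hk | hn].
  - rewrite (bigD1 k) //= big1 ?addr0; first exact: hle k.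
    move=> l lk; have := BB l k j lk.
    by move/eqP; rewrite mulf_eq0 (negbTE hk) orbF => /eqP.
  - rewrite big1; last by move=> k _; have := hn k; move/negbFE/eqP.
    have := hle (Ordinal N0); rewrite (eqP (negbFE (hn _))) !addr0.
    by [].
have -> : \tr H = \sum_j (P *m H *m hadj P) j j by rewrite -(tr_conj H Pu).
have -> : \tr Om = \sum_j (P *m Om *m hadj P) j j by rewrite -(tr_conj Om Pu).
have -> : \sum_k \tr (D k) = \sum_j \sum_k B k j j.
  by rewrite [RHS]exchange_big; apply: eq_bigr => k _; rewrite -(trB k).
rewrite -big_split /=; apply: ler_sum => j _; exact: key j.
Qed.
End S7.
Theorem proposition4p9 (R : rcfType) (d N : nat) (d_gt0 : (0 < d)%N)
  (N_gt0 : (0 < N)%N)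
  (Phi : 'I_N -> 'M[R[i]]_d -> 'M[R[i]]_d) (e : 'I_N -> 'I_d -> 'cV[R[i]]_d) :
  (forall k, quantum_channel (Phi k)) ->
  (forall k, orthonormal_basis (e k)) ->
  (forall k l : 'I_N, k != l ->
     hs_inner (Gmat (Phi k) (e k) - omega R d)
              (Gmat (Phi l) (e l) - omega R d) = 0) ->
  (exists H : 'M[R[i]]_(d * d),
      [/\ is_hermitian H, (forall k, loewner_ge H (Gmat (Phi k) (e k)))
        & \tr H = 1 - N%:R + \sum_(k < N) \tr (Gmat (Phi k) (e k))])
  /\ (forall H : 'M[R[i]]_(d * d), is_hermitian H ->
        (forall k, loewner_ge H (Gmat (Phi k) (e k))) ->
        1 - N%:R + \sum_(k < N) \tr (Gmat (Phi k) (e k)) <= \tr H).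
Proof.
move=> hPhi he horth.
set G := fun k => Gmat (Phi k) (e k).
set Om := omega R d.
pose D k := G k - Om.
have hD k : psd (D k) by apply: D_psd.
have hDh k : hadj (D k) = D k by apply: psd_herm.
have hDD k l : k != l -> D k *m D l = 0.
  move=> kl; apply: DD0 => //; rewrite -(hDh k); exact: horth.
have trOm : \tr Om = 1 by apply: tr_omega.
have trD k : \tr (D k) = \tr (G k) - 1 by rewrite /D raddfB /= trOm.
have GE k : G k = Om + D k by rewrite /D addrC subrK.
have hsum : \tr Om + \sum_k \tr (D k) = 1 - N%:R + \sum_k \tr (G k).
  rewrite trOm; under eq_bigr do rewrite trD.
  by rewrite sumrB sumr_const card_ord addrA addrAC.
split.
  exists (Om + \sum_k D k); split.
  - by rewrite /is_hermitian hadjD hadj_sum herm_omega; under eq_bigr do rewrite hDh.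
  - move=> k; rewrite /loewner_ge -/(G k).
    have -> : Om + \sum_k D k - G k = \sum_(l | l != k) D l.
      by rewrite (bigD1 k) //= GE addrA [X in X - _]addrC addrK.
    by apply: psd_sum.
  - by rewrite mxtraceD tr_sum hsum.
move=> H hH hge; rewrite -hsum.
apply: lower_bound => // k.
by rewrite -GE; apply: hge.
Qed.
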